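(* Let $\Omega_M=\mathbb R^p$, $\mathcal H=\mathbb R$, and let $M$ be a random vector in $\mathbb R^p$ with invertible covariance matrix $\mathrm{var}(M)$. Let $V_I$ be a real random variable, and let $\kappa_M(m_1,m_2)=c+m_1^\top m_2$ for a constant $c$. Assume the moments and range conditions below hold, so that the weak conditional mean is defined. Then $$\mathbb E[V_I\,\|\,M=m]=\beta_0+\beta^\top(m-\mathbb EM),$$ where $\beta_0=\mathbb EV_I$ and $\beta^\top=\mathrm{cov}(V_I,M)\,[\mathrm{var}(M)]^{-1}$, with $\mathrm{cov}(V_I,M)\in\mathbb R^{1\times p}$.
   Context: Let $\mathcal M$ be the RKHS of $\kappa_M$, $\tau_M(m)=\kappa_M(\cdot,m)$, and $\mu_M=\mathbb E\tau_M(M)$. Define $\Sigma_{MM}=\mathbb E[(\tau_M(M)-\mu_M)\otimes(\tau_M(M)-\mu_M)]$ and $\Sigma_{MV}=\mathbb E[(\tau_M(M)-\mu_M)\otimes(V_I-\mathbb EV_I)]$, with $\Sigma_{VM}$ the adjoint of $\Sigma_{MV}$ and $(a\otimes b)h=\langle b,h\rangle a$. $\Sigma_{MM}^\dagger$ is the Moore–Penrose inverse. Assume $\mathbb E\kappa_M(M,M)<\infty$, $\mathbb E[\kappa_M(M,M)^{1/2}|V_I|]<\infty$, $\mathrm{ran}\Sigma_{MV}\subset\mathrm{ran}\Sigma_{MM}$, and that $\Sigma_{MM}^\dagger\Sigma_{MV}$ is bounded. The weak conditional mean of $V_I$ given $M$ is $\mathbb E[V_I\,\|\,M=m]=\mathbb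 EV_I+\lambda(m)-\mathbb E\lambda(M)$, where $\lambda(m)$ is the Riesz representer of $v\mapsto(\Sigma_{MM}^\dagger\Sigma_{MV}v)(m)$. Equivalently, $$\mathbb E[V_I\,\|\,M=m]=\mathbb EV_I+\Sigma_{VM}\Sigma_{MM}^\dagger(\tau_M(m)-\mu_M).$$ *)

(* Defs.v *)
From HB Require Import structures.
From mathcomp Require Import all_boot all_order all_algebra.
From mathcomp Require Import all_classical all_reals all_analysis.

Set Implicit Arguments.
Unset Strict Implicit.
Unset Printing Implicit Defensive.

Import Order.TTheory GRing.Theory Num.Theory.
Import numFieldNormedType.Exports.

Local Open Scope classical_set_scope.
Local Open Scope ring_scope.

Section WeakCondMean.
Context {d : measure_display} {T : measurableType d} {R : realType}.
Variable P : probability T R.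

Definition Ex (f : T -> R) : R := \int[P]_(x in setT) f x.

Definition Evec n (X : T -> 'cV[R]_n) : 'cV[R]_n :=
  \col_i Ex (fun t => X t i 0).

Definition cov (X Y : T -> R) : R :=
  Ex (fun t => (X t - Ex X) * (Y t - Ex Y)).

Definition varmx p (M : T -> 'cV[R]_p) : 'M[R]_p :=
  \matrix_(i, j) cov (fun t => M t i 0) (fun t => M t j 0).

Definition covrow p (V : T -> R) (M : T -> 'cV[R]_p) : 'rV[R]_p :=
  \row_j cov V (fun t => M t j 0).

End WeakCondMean.

(* Moore--Penrose inverse of a real matrix, via the four Penrose conditions
   (w.r.t. the standard Euclidean inner products, so adjoint = transpose). *)
Definition penrose {R : realType} m n (A : 'M[R]_(m, n)) (B : 'M[R]_(n, m)) :=
  [/\ A *m B *m A = A, B *m A *m B = B,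
      (A *m B)^T = A *m B & (B *m A)^T = B *m A].

Definition mp_inv {R : realType} m n (A : 'M[R]_(m, n)) : 'M[R]_(n, m) :=
  xget 0 [set B | penrose A B].

(* An (isometric) coordinate model of the RKHS of a kernel kappa on a set X:
   Phi : X -> R^n with kappa x y = <Phi x, Phi y>, and the Phi x spanning R^n
   (equivalently w |-> (x |-> <w, Phi x>) is injective).  Then
   w |-> (x |-> <w, Phi x>) is an isometric isomorphism from R^n (Euclidean)
   onto the RKHS of kappa, sending Phi x to tau(x) = kappa(., x). *)
Definition rkhs_coords {R : realType} (X : Type) n
    (kappa : X -> X -> R) (Phi : X -> 'cV[R]_n) : Prop :=
  (forall x y, ((Phi x)^T *m Phi y) 0 0 = kappa x y) /\
  (forall w : 'cV[R]_n, (forall x, (w^T *m Phi x) 0 0 = 0) -> w = 0).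

Section WCM.
Context {d : measure_display} {T : measurableType d} {R : realType}.
Variable P : probability T R.
Variables (X : Type) (n : nat) (Phi : X -> 'cV[R]_n).
Variables (M : T -> X) (V : T -> R).

Definition mu_M : 'cV[R]_n := Evec P (fun t => Phi (M t)).

Definition Sigma_MM : 'M[R]_n :=
  \matrix_(i, j) Ex P (fun t => (Phi (M t) - mu_M) i 0 * (Phi (M t) - mu_M) j 0).

Definition Sigma_MV : 'M[R]_(n, 1) :=
  \col_i Ex P (fun t => (Phi (M t) - mu_M) i 0 * (V t - Ex P V)).

(* lambda(m): Riesz representer in H = R of
   v |-> (Sigma_MM^dagger Sigma_MV v)(m) = v * <Sigma_MM^dagger Sigma_MV 1, tau(m)>,
   i.e. the number (Sigma_MM^dagger Sigma_MV 1)(m). *)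
Definition lambda_wcm (m : X) : R :=
  ((mp_inv Sigma_MM *m Sigma_MV)^T *m Phi m) 0 0.

Definition weak_cond_mean (m : X) : R :=
  Ex P V + lambda_wcm m - Ex P (fun t => lambda_wcm (M t)).

End WCM.

(* Main.v *)
Require Import Defs.
From HB Require Import structures.
From mathcomp Require Import all_boot all_order all_algebra.
From mathcomp Require Import all_classical all_reals all_analysis.
From mathcomp Require Import ring lra measurable_realfun.

Import Order.TTheory GRing.Theory Num.Theory.
Import numFieldNormedType.Exports.
Local Open Scope classical_set_scope.
Local Open Scope ring_scope.

Section Alg.
Variables (R : realType) (p n : nat) (c : R) (Phi : 'cV[R]_p -> 'cV[R]_n).
Hypothesis hPhi : forall x y, ((Phi x)^T *m Phi y) 0 0 = c + (x^T *m y) 0 0.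

Definition Gf x := Phi x - Phi 0.
Definition Lmx : 'M[R]_(n, p) := \matrix_(i, j) Gf (delta_mx j 0) i 0.

Lemma GG x y : (Gf x)^T *m Gf y = x^T *m y.
Proof.
rewrite [LHS]mx11_scalar [RHS]mx11_scalar; congr (_%:M).
have E (A B : 'M[R]_1) : (A - B) 0 0 = A 0 0 - B 0 0 by rewrite !mxE.
rewrite /Gf !linearB /= !mulmxBl !E !hPhi.
rewrite !trmx0 !mul0mx !mulmx0 !mxE; ring.
Qed.

Lemma trL_mul v : Lmx^T *m v = \col_j ((Gf (delta_mx j 0))^T *m v) 0 0.
Proof.
apply/matrixP => j k; rewrite (ord1 k) !mxE; apply: eq_bigr => i _.
by rewrite !mxE.
Qed.

Lemma trL_G x : Lmx^T *m Gf x = x.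
Proof.
rewrite trL_mul; apply/matrixP => j k; rewrite (ord1 k) mxE GG.
by rewrite trmx_delta -rowE mxE.
Qed.

Lemma trLL : Lmx^T *m Lmx = 1%:M.
Proof.
apply/matrixP => j k; rewrite !mxE.
have -> : \sum_i Lmx^T j i * Lmx i k = ((Gf (delta_mx j 0))^T *m Gf (delta_mx k 0)) 0 0.
  by rewrite !mxE; apply: eq_bigr => i _; rewrite !mxE.
rewrite GG trmx_delta -rowE !mxE eqxx andbT.
by rewrite eq_sym.
Qed.

Lemma Phi_affine x : Phi x = Phi 0 + Lmx *m x.
Proof.
set g := Gf x - Lmx *m x.
have gg : g^T *m g = 0.
  have h2 : (Lmx *m x)^T *m Gf x = x^T *m x.
    by rewrite trmx_mul -mulmxA trL_G.
  have h1 : (Gf x)^T *m (Lmx *m x) = x^T *m x.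
    by rewrite -[LHS]trmxK trmx_mul trmxK h2 trmx_mul trmxK.
  have h3 : (Lmx *m x)^T *m (Lmx *m x) = x^T *m x.
    by rewrite trmx_mul -mulmxA (mulmxA Lmx^T) trLL mul1mx.
  have hG := GG x x.
  move: h1 h2 hG; rewrite /g; move: (Gf x) => G h1 h2 hG.
  rewrite !mulmxBr ![(_ - _)^T]linearB /= !mulmxBl hG h1 h2 h3.
  by rewrite !subrr.
have : g = 0.
  apply/matrixP => i k; rewrite (ord1 k) mxE.
  have := congr1 (fun A : 'M[R]_1 => A 0 0) gg; rewrite /= !mxE => /eqP.
  rewrite psumr_eq0; last by move=> l _; rewrite !mxE -expr2 sqr_ge0.
  move=> /allP /(_ i (mem_index_enum _)) /=; rewrite !mxE -expr2 sqrf_eq0.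
  by move/eqP.
move/eqP; rewrite /g /Gf subr_eq0 => /eqP <-.
by rewrite addrC subrK.
Qed.

Lemma c_ge0 : 0 <= c.
Proof.
have := hPhi 0 0; rewrite trmx0 mul0mx => H.
have -> : c = ((Phi 0)^T *m Phi 0) 0 0 by rewrite H mxE addr0.
rewrite mxE; apply: sumr_ge0 => i _; rewrite mxE -expr2 sqr_ge0 //.
Qed.

End Alg.
Arguments Lmx {R p n}.
Arguments Gf {R p n}.
Arguments trLL {R p n c Phi}.
Arguments Phi_affine {R p n c Phi}.
Arguments c_ge0 {R p n c Phi}.
Lemma mp_key (R : realType) n p (L : 'M[R]_(n, p)) (Sig : 'M[R]_p) :
  L^T *m L = 1%:M -> Sig \in unitmx ->
  L^T *m mp_inv (L *m Sig *m L^T) *m L = invmx Sig.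
Proof.
move=> LL uS.
set S := L *m Sig *m L^T.
have hex : exists B, penrose S B.
  exists (L *m invmx Sig *m L^T).
  have SB : S *m (L *m invmx Sig *m L^T) = L *m L^T.
    rewrite /S !mulmxA -(mulmxA _ L^T L) LL mulmx1 -(mulmxA L Sig) mulmxV //.
    by rewrite mulmx1.
  have BS : (L *m invmx Sig *m L^T) *m S = L *m L^T.
    rewrite /S !mulmxA -(mulmxA _ L^T L) LL mulmx1 -(mulmxA L (invmx Sig)) mulVmx //.
    by rewrite mulmx1.
  split.
  - by rewrite SB /S !mulmxA -(mulmxA _ L^T L) LL mulmx1.
  - by rewrite BS !mulmxA -(mulmxA _ L^T L) LL mulmx1.
  - by rewrite SB trmx_mul trmxK.
  - by rewrite BS trmx_mul trmxK.
have [h1 _ _ _] := xgetPex 0 hex.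
rewrite -/(mp_inv S) in h1.
set B := mp_inv S in h1 *.
have h : Sig *m (L^T *m B *m L) *m Sig = Sig.
  have := congr1 (fun X => L^T *m X *m L) h1.
  rewrite /S /= !mulmxA; rewrite ?LL ?mul1mx; repeat rewrite -(mulmxA _ L^T L) LL mulmx1.
  by [].
move: h; set X := L^T *m B *m L => h.
have -> : X = invmx Sig *m (Sig *m X *m Sig) *m invmx Sig.
  by rewrite !mulmxA mulmxK // mulVmx // mul1mx.
by rewrite h mulVmx // mul1mx.
Qed.
Section Integ.
Context {d : measure_display} {T : measurableType d} {R : realType}.
Variable P : probability T R.

Definition Int (f : T -> R) := P.-integrable setT (EFin \o f).

Lemma Int_ext {f g} : (forall t, f t = g t) -> Int g -> Int f.
Proof. by move=> fg; have -> : f = g by apply: funext. Qed.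

Lemma IntD f g : Int f -> Int g -> Int (fun t => f t + g t).
Proof.
move=> hf hg; have := integrableD measurableT hf hg.
by apply: eq_integrable => // t _ /=; rewrite EFinD.
Qed.

Lemma IntN f : Int f -> Int (fun t => - f t).
Proof.
move=> hf; have := integrableN hf.
by apply: eq_integrable => // t _ /=; rewrite EFinN.
Qed.

Lemma IntB f g : Int f -> Int g -> Int (fun t => f t - g t).
Proof. by move=> hf hg; apply: IntD => //; apply: IntN. Qed.

Lemma IntZ k f : Int f -> Int (fun t => k * f t).
Proof.
move=> hf; have := integrableZl measurableT k hf.
by apply: eq_integrable => // t _ /=; rewrite EFinM.
Qed.

Lemma Intc k : Int (fun _ => k).
Proof. exact: finite_measure_integrable_cst. Qed.

Lemma Int_sum (I : Type) (s : seq I) (F : I -> T -> R) :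
  (forall i, Int (F i)) -> Int (fun t => \sum_(i <- s) F i t).
Proof.
move=> hF; elim: s => [|i s ih].
  by apply: (Int_ext (g := fun _ => 0)) => [t|]; [rewrite big_nil|apply: Intc].
by apply: (Int_ext (g := fun t => F i t + \sum_(j <- s) F j t)) => [t|];
  [rewrite big_cons|apply: IntD].
Qed.

Lemma Int_dom (f g : T -> R) : measurable_fun setT f -> Int g ->
  (forall t, `|f t| <= g t) -> Int f.
Proof.
move=> mf hg fg; apply: le_integrable hg => //.
  exact/measurable_EFinP.
by move=> t _ /=; rewrite lee_fin; apply: (le_trans (fg t)); exact: ler_norm.
Qed.

Lemma Ex_ext {f g} : (forall t, f t = g t) -> Ex P f = Ex P g.
Proof. by move=> fg; have -> : f = g by apply: funext. Qed.

Lemma ExD f g : Int f -> Int g -> Ex P (fun t => f t + g t) = Ex P f + Ex P g.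
Proof. by move=> hf hg; rewrite /Ex RintegralD. Qed.

Lemma ExZ k f : Int f -> Ex P (fun t => k * f t) = k * Ex P f.
Proof. by move=> hf; rewrite /Ex RintegralZl. Qed.

Lemma Exc k : Ex P (fun _ => k) = k.
Proof. rewrite /Ex Rintegral_cst //. have h := probability_setT P. by rewrite [fine _](_ : _ = 1) ?mulr1 // -[1]/(fine 1%E) -h. Qed.

Lemma ExN f : Int f -> Ex P (fun t => - f t) = - Ex P f.
Proof.
move=> hf; rewrite (Ex_ext (g := fun t => (-1) * f t)) => [|t]; last by rewrite mulN1r.
by rewrite ExZ // mulN1r.
Qed.

Lemma ExB f g : Int f -> Int g -> Ex P (fun t => f t - g t) = Ex P f - Ex P g.
Proof. by move=> hf hg; rewrite ExD ?ExN //; apply: IntN. Qed.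

Lemma Ex_sum (I : Type) (s : seq I) (F : I -> T -> R) :
  (forall i, Int (F i)) ->
  Ex P (fun t => \sum_(i <- s) F i t) = \sum_(i <- s) Ex P (F i).
Proof.
move=> hF; elim: s => [|i s ih].
  by rewrite big_nil (Ex_ext (g := fun _ => 0)) ?Exc // => t; rewrite big_nil.
rewrite big_cons (Ex_ext (g := fun t => F i t + \sum_(j <- s) F j t)) => [|t];
  last by rewrite big_cons.
by rewrite ExD ?ih //; apply: Int_sum.
Qed.

End Integ.
Arguments Int_ext {d T R P f g}.
Arguments IntD {d T R P f g}.
Arguments IntN {d T R P f}.
Arguments IntB {d T R P f g}.
Arguments IntZ {d T R P} k {f}.
Arguments Intc {d T R} P k.
Arguments Int_sum {d T R P I} s {F}.
Arguments Int_dom {d T R P f g}.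
Arguments Ex_ext {d T R P f g}.
Arguments ExD {d T R P f g}.
Arguments ExZ {d T R P} k {f}.
Arguments Exc {d T R} P k.
Arguments ExN {d T R P f}.
Arguments ExB {d T R P f g}.
Arguments Ex_sum {d T R P I} s {F}.

Lemma sq_le_sum {R : realType} {p} (x : 'cV[R]_p) k :
  x k 0 ^+ 2 <= \sum_i x i 0 ^+ 2.
Proof.
rewrite (bigD1 k) //= lerDl; apply: sumr_ge0 => i _; exact: sqr_ge0.
Qed.

Lemma ip_sum {R : realType} {p} (x : 'cV[R]_p) :
  (x^T *m x) 0 0 = \sum_i x i 0 ^+ 2.
Proof. by rewrite mxE; apply: eq_bigr => i _; rewrite mxE expr2. Qed.

Theorem proposition2 (d : measure_display) (T : measurableType d) (R : realType)
  (P : probability T R) (p : nat) (M : T -> 'cV[R]_p) (V : T -> R) (c : R)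
  (n : nat) (Phi : 'cV[R]_p -> 'cV[R]_n) :
  let kappa := fun m1 m2 : 'cV[R]_p => c + (m1^T *m m2) 0 0 in
  (* Phi is a coordinate model of the RKHS of kappa_M(m1,m2) = c + m1^T m2 *)
  rkhs_coords kappa Phi ->
  (* M is a random vector, V a real random variable *)
  (forall i, measurable_fun setT (fun t => M t i 0)) ->
  measurable_fun setT V ->
  P.-integrable setT (EFin \o V) ->
  (* E kappa_M(M, M) < oo *)
  P.-integrable setT (fun t => (kappa (M t) (M t))%:E) ->
  (* E [kappa_M(M, M)^(1/2) |V|] < oo *)
  P.-integrable setT (fun t => (Num.sqrt (kappa (M t) (M t)) * `|V t|)%:E) ->
  (* ran Sigma_MV is contained in ran Sigma_MM *)
  (exists W : 'M[R]_(n, 1), Sigma_MV P Phi M V = Sigma_MM P Phi M *m W) ->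
  (* var(M) invertible *)
  varmx P M \in unitmx ->
  forall m : 'cV[R]_p,
    weak_cond_mean P Phi M V m =
    Ex P V + ((covrow P V M *m invmx (varmx P M)) *m (m - Evec P M)) 0 0.
Proof.
move=> kappa [hPhi _] hM hV hVi hK hKV _ hU m.
have hPhi' : forall x y, ((Phi x)^T *m Phi y) 0 0 = c + (x^T *m y) 0 0 := hPhi.
have LL := trLL hPhi'.
have Haff := Phi_affine hPhi'.
have c0 := c_ge0 hPhi'.
move: LL Haff; set L := Lmx Phi; clearbody L => LL Haff.
set a := Phi 0 in Haff.
have IK : Int P (fun t => c + \sum_i M t i 0 ^+ 2).
  by apply: Int_ext hK => t; rewrite /kappa ip_sum.
have IKV : Int P (fun t => Num.sqrt (c + \sum_i M t i 0 ^+ 2) * `|V t|).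
  by apply: Int_ext hKV => t; rewrite /kappa ip_sum.
have IV : Int P V := hVi.
have IM k : Int P (fun t => M t k 0).
  apply: (Int_dom (hM k) (IntD (Intc P 1) IK)) => t.
  have := sq_le_sum (M t) k.
  move: (M t k 0) (\sum_i M t i 0 ^+ 2) => x s hs.
  have : `|x| <= 1 + x ^+ 2.
    case: (lerP 0 x) => hx; [rewrite ger0_norm // | rewrite ltr0_norm //]; nra.
  lra.
have IMM k l : Int P (fun t => M t k 0 * M t l 0).
  apply: (Int_dom (measurable_funM (hM k) (hM l)) (IntZ 2 IK)) => t.
  rewrite /= normrM.
  have := sq_le_sum (M t) k; have := sq_le_sum (M t) l.
  move: (M t k 0) (M t l 0) (\sum_i M t i 0 ^+ 2) => x y s hy hx.
  have : `|x| * `|y| <= x ^+ 2 + y ^+ 2.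
    case: (lerP 0 x) => h1; case: (lerP 0 y) => h2;
      rewrite ?(ger0_norm h1) ?(ltr0_norm h1) ?(ger0_norm h2) ?(ltr0_norm h2); nra.
  lra.
have IMV k : Int P (fun t => M t k 0 * V t).
  apply: (Int_dom (measurable_funM (hM k) hV) IKV) => t.
  rewrite normrM ler_wpM2r //.
  rewrite -sqrtr_sqr ler_sqrt.
    by have := sq_le_sum (M t) k; lra.
  by apply: addr_ge0 => //; apply: sumr_ge0 => i _; exact: sqr_ge0.
pose EMk k := Ex P (fun t => M t k 0).
pose D k l t := (M t k 0 - EMk k) * (M t l 0 - EMk l).
have ID k l : Int P (D k l).
  apply: (Int_ext (g := fun t => M t k 0 * M t l 0 - EMk l * M t k 0
     - EMk k * M t l 0 + EMk k * EMk l)) => [t|].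
    by rewrite /D; ring.
  apply: IntD; last exact: Intc.
  by apply: IntB; [apply: IntB|]; [|apply: IntZ|apply: IntZ].
pose E k t := (V t - Ex P V) * (M t k 0 - EMk k).
have IE k : Int P (E k).
  apply: (Int_ext (g := fun t => M t k 0 * V t - EMk k * V t
     - Ex P V * M t k 0 + Ex P V * EMk k)) => [t|].
    by rewrite /E; ring.
  apply: IntD; last exact: Intc.
  by apply: IntB; [apply: IntB|]; [|apply: IntZ|apply: IntZ].
have EA (A B : 'M[R]_1) : (A + B) 0 0 = A 0 0 + B 0 0 by rewrite mxE.
have Hmu : mu_M P Phi M = a + L *m Evec P M.
  apply/matrixP => i j; rewrite (ord1 j) !mxE.
  rewrite (Ex_ext (g := fun t => a i 0 + \sum_k L i k * M t k 0)) => [|t]; last first.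
    by rewrite Haff !mxE.
  rewrite ExD ?Exc; last 2 first.
  - exact: Intc.
  - by apply: Int_sum => k; apply: IntZ.
  rewrite Ex_sum; last by move=> k; apply: IntZ.
  congr (_ + _); apply: eq_bigr => k _; rewrite ExZ; [by rewrite mxE | exact: IM].
have Hcent t i : (Phi (M t) - mu_M P Phi M) i 0 = \sum_k L i k * (M t k 0 - EMk k).
  rewrite Hmu Haff -[a + _ - _]/(a + L *m M t - (a + L *m Evec P M)).
  rewrite opprD addrACA subrr add0r -mulmxBr mxE.
  by apply: eq_bigr => k _; rewrite !mxE.
have HSMM : Sigma_MM P Phi M = L *m varmx P M *m L^T.
  apply/matrixP => i j; rewrite mxE.
  rewrite (Ex_ext (g := fun t => \sum_k \sum_l (L i k * L j l) * D k l t))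
    => [|t]; last first.
    rewrite !Hcent big_distrl; apply: eq_bigr => k _ /=.
    rewrite big_distrr; apply: eq_bigr => l _ /=.
    by rewrite /D mulrACA.
  rewrite Ex_sum; last by move=> k; apply: Int_sum => l; apply: IntZ.
  rewrite mxE.
  under [RHS]eq_bigr do rewrite mxE big_distrl.
  rewrite exchange_big /=; apply: eq_bigr => k _.
  rewrite Ex_sum; last by move=> l; apply: IntZ.
  apply: eq_bigr => l _; rewrite ExZ; [by rewrite !mxE mulrAC | exact: ID].
have HSMV : Sigma_MV P Phi M V = L *m (covrow P V M)^T.
  apply/matrixP => i j; rewrite (ord1 j) !mxE.
  rewrite (Ex_ext (g := fun t => \sum_k L i k * E k t))
    => [|t]; last first.
    rewrite Hcent big_distrl; apply: eq_bigr => k _ /=.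
    by rewrite /E -mulrA; congr (_ * _); rewrite mulrC.
  rewrite Ex_sum; last by move=> k; apply: IntZ.
  apply: eq_bigr => k _; rewrite ExZ; [by rewrite !mxE | exact: IE].
have Hsym : (varmx P M)^T = varmx P M.
  apply/matrixP => i j; rewrite !mxE /cov.
  by apply: Ex_ext => t; rewrite mulrC.
set w := mp_inv (Sigma_MM P Phi M) *m Sigma_MV P Phi M V.
have Hw : w^T *m L = covrow P V M *m invmx (varmx P M).
  have h : L^T *m w = invmx (varmx P M) *m (covrow P V M)^T.
    by rewrite /w HSMM HSMV !mulmxA mp_key.
  by rewrite -[w^T *m L]trmxK trmx_mul trmxK h trmx_mul trmxK trmx_inv Hsym.
have hl x : lambda_wcm P Phi M V x = (w^T *m a) 0 0 + ((w^T *m L) *m x) 0 0.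
  by rewrite /lambda_wcm -/w Haff mulmxDr mulmxA EA.
move: hl; rewrite Hw; set W := covrow P V M *m invmx (varmx P M) => hl.
move: W hl => W hl.
have hEl : Ex P (fun t => lambda_wcm P Phi M V (M t)) =
    (w^T *m a) 0 0 + \sum_k W 0 k * EMk k.
  rewrite (Ex_ext (g := fun t => (w^T *m a) 0 0 + \sum_k W 0 k * M t k 0))
    => [|t]; last by rewrite hl [(W *m _) 0 0]mxE.
  rewrite ExD ?Exc; last 2 first.
  - exact: Intc.
  - by apply: Int_sum => k; apply: IntZ.
  rewrite Ex_sum; last by move=> k; apply: IntZ.
  congr (_ + _); apply: eq_bigr => k _; rewrite ExZ; [by [] | exact: IM].
rewrite /weak_cond_mean hEl hl ![(W *m _) 0 0]mxE.
have -> : \sum_k W 0 k * (m - Evec P M) k 0 =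
    \sum_k W 0 k * m k 0 - \sum_k W 0 k * EMk k.
  by rewrite -sumrB; apply: eq_bigr => k _; rewrite !mxE mulrBr.
ring.
Qed.
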